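(* Let $K$ be a scattered compact Hausdorff space and let $X$ and $Y$ be real Banach spaces with $Y$ separable. If $Y$ embeds isomorphically into $C(K,X)$, then there exist a countable metrizable compact space $K_0$ and a separable closed subspace $X_0\subseteq X$ such that $Y$ embeds isomorphically into $C(K_0,X_0)$ and $C(K_0,X_0)$ embeds isomorphically into $C(K,X)$.
   Context: For a compact Hausdorff space $K$ and a real Banach space $X$, $C(K,X)$ denotes the Banach space of continuous functions $f:K\to X$ with the norm $\|f\|=\sup_{x\in K}\|f(x)\|$. An isomorphic embedding is a linear $T$ with $A\|u\|\le\|Tu\|\le B\|u\|$ for some $A,B>0$. A topological space is scattered if every nonempty subset has an isolated point. *)

(* Defs.v *)
From Stdlib Require Import Reals List.
Open Scope R_scope.

Record TopSpace := {
  pt :> Type;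
  is_open : (pt -> Prop) -> Prop;
  open_full : is_open (fun _ => True);
  open_inter : forall U V, is_open U -> is_open V -> is_open (fun x => U x /\ V x);
  open_union : forall F : (pt -> Prop) -> Prop,
      (forall U, F U -> is_open U) -> is_open (fun x => exists U, F U /\ U x)
}.
Arguments is_open {t} _.

Definition top_compact (K : TopSpace) : Prop :=
  forall F : (K -> Prop) -> Prop,
    (forall U, F U -> is_open U) ->
    (forall x : K, exists U, F U /\ U x) ->
    exists l : list (K -> Prop), Forall F l /\ (forall x : K, exists U, In U l /\ U x).

Definition hausdorff (K : TopSpace) : Prop :=
  forall x y : K, x <> y ->
    exists U V, is_open U /\ is_open V /\ U x /\ V y /\ (forall z, U z -> V z -> False).

Definition scattered (K : TopSpace) : Prop :=
  forall A : K -> Prop, (exists x, A x) ->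
    exists x, A x /\ exists U, is_open U /\ U x /\ (forall z, U z -> A z -> z = x).

Definition countable (K : TopSpace) : Prop :=
  exists f : K -> nat, forall x y, f x = f y -> x = y.

Definition is_metric {T : Type} (d : T -> T -> R) : Prop :=
  (forall x y, 0 <= d x y) /\ (forall x y, d x y = 0 <-> x = y) /\
  (forall x y, d x y = d y x) /\ (forall x y z, d x z <= d x y + d y z).

Definition metrizable (K : TopSpace) : Prop :=
  exists d : K -> K -> R, is_metric d /\
    forall U : K -> Prop,
      is_open U <-> (forall x, U x -> exists r, 0 < r /\ forall z, d x z < r -> U z).

Record Banach := {
  bcar :> Type;
  bzero : bcar;
  badd : bcar -> bcar -> bcar;
  bopp : bcar -> bcar;
  bscal : R -> bcar -> bcar;
  bnorm : bcar -> R;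
  badd_assoc : forall x y z, badd x (badd y z) = badd (badd x y) z;
  badd_comm : forall x y, badd x y = badd y x;
  badd_zero : forall x, badd x bzero = x;
  badd_opp : forall x, badd x (bopp x) = bzero;
  bscal_one : forall x, bscal 1 x = x;
  bscal_assoc : forall a b x, bscal a (bscal b x) = bscal (a * b) x;
  bscal_distr_l : forall a x y, bscal a (badd x y) = badd (bscal a x) (bscal a y);
  bscal_distr_r : forall a b x, bscal (a + b) x = badd (bscal a x) (bscal b x);
  bnorm_zero : forall x, bnorm x = 0 -> x = bzero;
  bnorm_scal : forall a x, bnorm (bscal a x) = Rabs a * bnorm x;
  bnorm_triangle : forall x y, bnorm (badd x y) <= bnorm x + bnorm y;
  bcomplete : forall u : nat -> bcar,
    (forall eps, 0 < eps -> exists N, forall m n, (N <= m)%nat -> (N <= n)%nat ->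
        bnorm (badd (u m) (bopp (u n))) < eps) ->
    exists l, forall eps, 0 < eps -> exists N, forall n, (N <= n)%nat ->
        bnorm (badd (u n) (bopp l)) < eps
}.
Arguments bzero {_}. Arguments badd {_}. Arguments bopp {_}.
Arguments bscal {_}. Arguments bnorm {_}.

Definition bsub {X : Banach} (x y : X) : X := badd x (bopp y).

Definition separable (X : Banach) : Prop :=
  exists u : nat -> X, forall x eps, 0 < eps -> exists n, bnorm (bsub x (u n)) < eps.

Definition closed_subspace {X : Banach} (X0 : X -> Prop) : Prop :=
  X0 bzero /\ (forall x y, X0 x -> X0 y -> X0 (badd x y)) /\
  (forall a x, X0 x -> X0 (bscal a x)) /\
  (forall (u : nat -> X) l, (forall n, X0 (u n)) ->
     (forall eps, 0 < eps -> exists N, forall n, (N <= n)%nat -> bnorm (bsub (u n) l) < eps) ->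
     X0 l).

Definition separable_sub {X : Banach} (X0 : X -> Prop) : Prop :=
  exists u : nat -> X, (forall n, X0 (u n)) /\
    forall x eps, X0 x -> 0 < eps -> exists n, bnorm (bsub x (u n)) < eps.

Definition continuous {K : TopSpace} {X : Banach} (f : K -> X) : Prop :=
  forall x eps, 0 < eps ->
    exists U, is_open U /\ U x /\ forall z, U z -> bnorm (bsub (f z) (f x)) < eps.

(* s is the sup norm sup_{k in K} ||f k|| (0 if K is empty) *)
Definition is_supnorm {K : TopSpace} {X : Banach} (f : K -> X) (s : R) : Prop :=
  is_lub (fun r => r = 0 \/ exists k, r = bnorm (f k)) s.

Definition in_CKX0 {K : TopSpace} {X : Banach} (X0 : X -> Prop) (f : K -> X) : Prop :=
  continuous f /\ forall k, X0 (f k).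

Definition embeds_Banach_into_C (Y : Banach) (K : TopSpace) (X : Banach) (X0 : X -> Prop) : Prop :=
  exists (T : Y -> K -> X) (A B : R), 0 < A /\ 0 < B /\
    (forall y, in_CKX0 X0 (T y)) /\
    (forall a y1 y2 k, T (badd (bscal a y1) y2) k = badd (bscal a (T y1 k)) (T y2 k)) /\
    (forall y, exists s, is_supnorm (T y) s /\ A * bnorm y <= s /\ s <= B * bnorm y).

Definition embeds_C_into_C (K0 : TopSpace) (X : Banach) (X0 : X -> Prop)
    (K : TopSpace) (X' : Banach) (X1 : X' -> Prop) : Prop :=
  exists (S : (K0 -> X) -> (K -> X')) (A B : R), 0 < A /\ 0 < B /\
    (forall f, in_CKX0 X0 f -> in_CKX0 X1 (S f)) /\
    (forall a f g, in_CKX0 X0 f -> in_CKX0 X0 g ->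
       forall k, S (fun t => badd (bscal a (f t)) (g t)) k = badd (bscal a (S f k)) (S g k)) /\
    (forall f, in_CKX0 X0 f -> exists s s', is_supnorm f s /\ is_supnorm (S f) s' /\
        A * s <= s' /\ s' <= B * s).

(* Main.v *)
Require Import Defs.
From Stdlib Require Import Reals List Cantor FunctionalExtensionality PropExtensionality ProofIrrelevance ClassicalEpsilon Classical Lra Lia.
From Stdlib Require Import ZArith.
From mathcomp Require classical_sets ssreflect eqtype ssrnat seq choice.
Open Scope R_scope.

Lemma zornP (T : Type) (P : (T -> Prop) -> Prop) :
  (forall F : (T -> Prop) -> Prop, (forall X, F X -> P X) ->
     (forall s t, F s -> F t -> (forall x, s x -> t x) \/ (forall x, t x -> s x)) ->
     P (fun x => exists X, F X /\ X x)) ->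
  exists A, P A /\ forall B, (forall x, A x -> B x) -> ~ (forall x, B x -> A x) -> ~ P B.
Proof.
intros H.
destruct (@classical_sets.Zorn_bigcup T P) as [A [PA HA]].
- intros F FP Ft. unfold classical_sets.bigcup.
  specialize (H F FP Ft).
  replace (fun x => exists2 X, F X & X x) with (fun x => exists X, F X /\ X x).
  exact H. apply FunctionalExtensionality.functional_extensionality; intro x.
  apply PropExtensionality.propositional_extensionality; split.
  intros [X [h1 h2]]; exists X; auto. intros [X h1 h2]; exists X; auto.
- exists A; split; auto. intros B h1 h2. apply HA. split; auto.
Qed.

Arguments badd_assoc {_}. Arguments badd_comm {_}. Arguments badd_zero {_}. Arguments badd_opp {_}.
Arguments bscal_one {_}. Arguments bscal_assoc {_}. Arguments bscal_distr_l {_}. Arguments bscal_distr_r {_}.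
Arguments bnorm_zero {_}. Arguments bnorm_scal {_}. Arguments bnorm_triangle {_}. Arguments bcomplete {_}.
Section BanachLemmas.
Context {X : Banach}.
Implicit Types x y z : X.

Lemma badd_zero_l x : badd bzero x = x.
Proof. rewrite badd_comm; apply badd_zero. Qed.

Lemma badd_cancel x y z : badd x y = badd x z -> y = z.
Proof.
  intros H.
  assert (E : forall w, badd (bopp x) (badd x w) = w).
  { intros w. rewrite badd_assoc, (badd_comm (bopp x) x), badd_opp, badd_zero_l. reflexivity. }
  rewrite <- (E y), <- (E z), H. reflexivity.
Qed.

Lemma bscal_zero_l x : bscal 0 x = bzero.
Proof.
  apply (badd_cancel (bscal 0 x)). rewrite <- bscal_distr_r, Rplus_0_r, badd_zero. reflexivity.
Qed.

Lemma bscal_zero_r a : bscal a (@bzero X) = bzero.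
Proof.
  apply (badd_cancel (bscal a bzero)). rewrite <- bscal_distr_l, !badd_zero. reflexivity.
Qed.

Lemma bopp_scal x : bopp x = bscal (-1) x.
Proof.
  apply (badd_cancel x). rewrite badd_opp.
  rewrite <- (bscal_one x) at 1. rewrite <- bscal_distr_r, Rplus_opp_r, bscal_zero_l. reflexivity.
Qed.

Lemma bnorm0 : bnorm (@bzero X) = 0.
Proof. rewrite <- (bscal_zero_r 0), bnorm_scal, Rabs_R0. ring. Qed.

Lemma bnorm_opp x : bnorm (bopp x) = bnorm x.
Proof. rewrite bopp_scal, bnorm_scal. replace (Rabs (-1)) with 1. ring. rewrite Rabs_left; lra. Qed.

Lemma bnorm_nonneg x : 0 <= bnorm x.
Proof.
  pose proof (bnorm_triangle x (bopp x)) as H. rewrite badd_opp, bnorm0, bnorm_opp in H. lra.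
Qed.

Lemma bsub_self x : bsub x x = bzero.
Proof. apply badd_opp. Qed.

Lemma bsub_eq0 x y : bnorm (bsub x y) = 0 -> x = y.
Proof.
  intros H. apply bnorm_zero in H. unfold bsub in H.
  apply (badd_cancel (bopp y)). rewrite (badd_comm (bopp y) y), badd_opp, badd_comm. exact H.
Qed.

Lemma bsub_split x y z : badd (bsub x y) (bsub y z) = bsub x z.
Proof.
  unfold bsub. rewrite badd_assoc. f_equal.
  rewrite <- badd_assoc, (badd_comm (bopp y) y), badd_opp, badd_zero. reflexivity.
Qed.

Lemma bsub_tri x y z : bnorm (bsub x z) <= bnorm (bsub x y) + bnorm (bsub y z).
Proof. rewrite <- (bsub_split x y z). apply bnorm_triangle. Qed.

Lemma bopp_add x y : bopp (badd x y) = badd (bopp x) (bopp y).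
Proof. rewrite !bopp_scal. apply bscal_distr_l. Qed.

Lemma bopp_opp x : bopp (bopp x) = x.
Proof. rewrite !bopp_scal, bscal_assoc. replace (-1 * -1) with 1 by ring. apply bscal_one. Qed.

Lemma bsub_opp x y : bsub y x = bopp (bsub x y).
Proof. unfold bsub. rewrite bopp_add, bopp_opp, badd_comm. reflexivity. Qed.

Lemma bsub_sym x y : bnorm (bsub x y) = bnorm (bsub y x).
Proof. rewrite (bsub_opp x y), bnorm_opp. reflexivity. Qed.

Lemma bnorm_sub_le x y : bnorm (bsub x y) <= bnorm x + bnorm y.
Proof. unfold bsub. rewrite <- (bnorm_opp y). apply bnorm_triangle. Qed.

Lemma badd_swap4 (a b c d : X) : badd (badd a b) (badd c d) = badd (badd a c) (badd b d).
Proof.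
  rewrite !badd_assoc. f_equal. rewrite <- !badd_assoc. f_equal. apply badd_comm.
Qed.

Lemma bsub_add (a b c d : X) : bsub (badd a b) (badd c d) = badd (bsub a c) (bsub b d).
Proof. unfold bsub. rewrite bopp_add. apply badd_swap4. Qed.

Lemma bsub_scal a (x y : X) : bsub (bscal a x) (bscal a y) = bscal a (bsub x y).
Proof.
  unfold bsub. rewrite bscal_distr_l, !bopp_scal, !bscal_assoc. f_equal. f_equal. ring.
Qed.

Lemma bsub_scal2 a b (x : X) : bsub (bscal a x) (bscal b x) = bscal (a - b) x.
Proof.
  unfold bsub. rewrite bopp_scal, bscal_assoc, <- bscal_distr_r. f_equal. ring.
Qed.

Lemma bsub_zero x : bsub x bzero = x.
Proof. unfold bsub. rewrite bopp_scal, bscal_zero_r. apply badd_zero. Qed.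

Lemma bnorm_sub_rev x y : bnorm x - bnorm y <= bnorm (bsub x y).
Proof.
  pose proof (bsub_tri x y bzero) as H. rewrite !bsub_zero in H. lra.
Qed.

End BanachLemmas.
Module Enc.
Import ssreflect eqtype ssrnat seq choice.
Definition dec (n : nat) : option (list (bool * nat * nat * nat)) := unpickle n.
Lemma decP l : exists n, dec n = Some l.
Proof. exists (pickle l). apply: pickleK. Qed.
End Enc.

Fixpoint lmax {A : Type} (g : A -> R) (l : list A) : R :=
  match l with nil => 0 | a :: l' => Rmax (g a) (lmax g l') end.

Lemma lmax_ge {A : Type} (g : A -> R) (l : list A) a : In a l -> g a <= lmax g l.
Proof.
  induction l as [|b l IH]; simpl; [tauto|]. intros [->|H].
  - apply Rmax_l.
  - eapply Rle_trans; [apply IH; auto | apply Rmax_r].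
Qed.

Lemma lmax_nonneg {A : Type} (g : A -> R) (l : list A) : 0 <= lmax g l.
Proof.
  induction l as [|b l IH]; simpl; [lra|]. eapply Rle_trans; [apply IH|apply Rmax_r].
Qed.

Section TopLemmas.
Context {Z : TopSpace}.

Lemma open_local (S : Z -> Prop) :
  (forall x, S x -> exists U, is_open U /\ U x /\ forall z, U z -> S z) -> is_open S.
Proof.
  intros H.
  assert (E : S = (fun x => exists U, (is_open U /\ forall z, U z -> S z) /\ U x)).
  { extensionality x; apply propositional_extensionality; split.
    - intros Sx. destruct (H x Sx) as [U [HU [Ux HS]]]. exists U; auto.
    - intros [U [[_ HS] Ux]]. auto. }
  rewrite E. apply open_union. intros U [HU _]; exact HU.
Qed.

Lemma open_ext (S S' : Z -> Prop) : is_open S -> (forall x, S x <-> S' x) -> is_open S'.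
Proof.
  intros H E. replace S' with S; auto.
  extensionality x; apply propositional_extensionality; auto.
Qed.

Lemma list_pts (rho : Z -> Z -> Prop) (l : list (Z -> Prop)) :
  Forall (fun U => exists z, U = rho z) l ->
  exists lp, forall U, In U l -> exists z, In z lp /\ U = rho z.
Proof.
  induction l as [|U l IH]; intros HF.
  - exists nil. intros U [].
  - inversion HF as [|? ? [z Ez] HF']; subst. destruct (IH HF') as [lp Hlp].
    exists (z :: lp). intros U' [HU'|HU'].
    + exists z; split; [left; auto| congruence].
    + destruct (Hlp U' HU') as [z' [? ?]]. exists z'; split; [right|]; auto.
Qed.

Lemma compact_pts (rho : Z -> Z -> Prop) : top_compact Z ->
  (forall z, is_open (rho z)) -> (forall z, rho z z) ->
  exists l : list Z, forall x, exists z, In z l /\ rho z x.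
Proof.
  intros HC Ho Hz.
  destruct (HC (fun U => exists z, U = rho z)) as [l [Hl Hcov]].
  - intros U [z ->]; auto.
  - intros x. exists (rho x); split; [exists x; reflexivity | auto].
  - destruct (list_pts rho l Hl) as [lp Hlp]. exists lp. intros x.
    destruct (Hcov x) as [U [HU Ux]].
    destruct (Hlp U HU) as [z [Hz' ->]]. eauto.
Qed.

Lemma open_finite (k : Z) (P : nat -> Z -> Prop) (N : nat) :
  (forall n, (n < N)%nat -> exists U, is_open U /\ U k /\ forall z, U z -> P n z) ->
  exists U, is_open U /\ U k /\ forall z, U z -> forall n, (n < N)%nat -> P n z.
Proof.
  induction N as [|N IH]; intros H.
  - exists (fun _ => True). split; [apply open_full|]. split; auto. intros; lia.
  - destruct IH as [U [HU [Uk HUP]]]. { intros n Hn. apply H. lia. }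
    destruct (H N ltac:(lia)) as [V [HV [Vk HVP]]].
    exists (fun x => U x /\ V x). split; [apply open_inter; auto|]. split; auto.
    intros z [Uz Vz] n Hn. destruct (Nat.eq_dec n N) as [->|Hne]; auto.
    apply HUP; auto. lia.
Qed.

Lemma cont_bounded {X : Banach} (f : Z -> X) : top_compact Z -> continuous f ->
  exists M, forall z, bnorm (f z) <= M.
Proof.
  intros HC Hf.
  set (rho := fun z w => exists U, is_open U /\ U w /\ forall t, U t -> bnorm (bsub (f t) (f z)) < 1).
  destruct (compact_pts rho HC) as [l Hl].
  - intros z. apply open_local. intros w [U [HU [Uw HUt]]]. exists U; split; auto; split; auto.
    intros t Ut. exists U; auto.
  - intros z. destruct (Hf z 1 ltac:(lra)) as [U [HU [Uz HUt]]]. exists U; auto.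
  - exists (lmax (fun z => bnorm (f z) + 1) l). intros w.
    destruct (Hl w) as [z [Hz [U [HU [Uw HUt]]]]].
    pose proof (lmax_ge (fun z => bnorm (f z) + 1) l z Hz) as Hm. simpl in Hm.
    pose proof (bsub_tri (f w) (f z) bzero). rewrite !bsub_zero in H.
    specialize (HUt w Uw). rewrite bsub_sym in HUt. rewrite bsub_sym in H.
    pose proof (bsub_tri (f w) (f z) bzero) as H2. rewrite !bsub_zero in H2.
    rewrite bsub_sym in H2. lra.
Qed.

End TopLemmas.

Section Sup.
Context {Z : TopSpace} {X : Banach}.

Lemma supnorm_exists (f : Z -> X) (M : R) : (forall z, bnorm (f z) <= M) -> exists s, is_supnorm f s.
Proof.
  intros HM.
  destruct (completeness (fun r => r = 0 \/ exists k, r = bnorm (f k))) as [m Hm].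
  - exists (Rmax 0 M). intros r [->|[k ->]]. apply Rmax_l. eapply Rle_trans; [apply HM|apply Rmax_r].
  - exists 0; auto.
  - exists m; exact Hm.
Qed.

Lemma supnorm_ge (f : Z -> X) s k : is_supnorm f s -> bnorm (f k) <= s.
Proof. intros [H _]. apply H. right; eauto. Qed.

Lemma supnorm_nonneg (f : Z -> X) s : is_supnorm f s -> 0 <= s.
Proof. intros [H _]. apply H. left; auto. Qed.

Lemma supnorm_le (f : Z -> X) s t : is_supnorm f s -> 0 <= t -> (forall k, bnorm (f k) <= t) -> s <= t.
Proof. intros [_ H] Ht Hk. apply H. intros r [->|[k ->]]; auto. Qed.

End Sup.

Lemma supnorm_transfer {Z Z' : TopSpace} {X : Banach} (f : Z -> X) (g : Z' -> X) s :
  (forall k, exists k', g k = f k') -> (forall k', exists k, f k' = g k) ->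
  is_supnorm f s -> is_supnorm g s.
Proof.
  intros H1 H2 [Hu Hl]. split.
  - intros r [->|[k ->]]. apply Hu; left; auto. destruct (H1 k) as [k' ->]. apply Hu; right; eauto.
  - intros b Hb. apply Hl. intros r [->|[k' ->]]. apply Hb; left; auto.
    destruct (H2 k') as [k ->]. apply Hb; right; eauto.
Qed.
Lemma small_inv (eps : R) : 0 < eps -> exists N : nat, / (INR N + 1) < eps.
Proof.
  intros He. destruct (archimed_cor1 eps He) as [N [HN HN0]]. exists N.
  apply lt_0_INR in HN0. eapply Rle_lt_trans; [|exact HN].
  apply Rlt_le, Rinv_lt_contravar; nra.
Qed.

Lemma inv_lmax_lt (M dl : R) : 0 <= M -> 0 < dl -> 2 / dl <= M -> / (M + 1) < dl / 2.
Proof.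
  intros HM Hd H. unfold Rdiv in *.
  assert (2 < (M + 1) * dl).
  { apply (Rmult_le_compat_r dl) in H; [|lra]. rewrite Rmult_assoc, Rinv_l in H; lra. }
  apply (Rmult_lt_reg_r (M + 1)); [lra|]. rewrite Rinv_l; lra.
Qed.

Section Main.
Variables (K : TopSpace) (X Y : Banach).
Hypothesis HKc : top_compact K.
Hypothesis HKs : scattered K.
Variable u : nat -> Y.
Hypothesis Hu : forall (y : Y) eps, 0 < eps -> exists n, bnorm (bsub y (u n)) < eps.
Variable T : Y -> K -> X.
Variables A B : R.
Hypothesis HA : 0 < A.
Hypothesis HB : 0 < B.
Hypothesis HTc : forall y, in_CKX0 (fun _ : X => True) (T y).
Hypothesis HTl : forall a y1 y2 k, T (badd (bscal a y1) y2) k = badd (bscal a (T y1 k)) (T y2 k).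
Hypothesis HTn : forall y, exists s, is_supnorm (T y) s /\ A * bnorm y <= s /\ s <= B * bnorm y.

Lemma T_zero k : T bzero k = bzero.
Proof.
  pose proof (HTl 1 bzero bzero k) as H. rewrite bscal_one, badd_zero, bscal_one in H.
  apply (badd_cancel (T bzero k)). rewrite badd_zero. symmetry; exact H.
Qed.

Lemma T_add y1 y2 k : T (badd y1 y2) k = badd (T y1 k) (T y2 k).
Proof. pose proof (HTl 1 y1 y2 k) as H. rewrite !bscal_one in H. exact H. Qed.

Lemma T_scal a y k : T (bscal a y) k = bscal a (T y k).
Proof. pose proof (HTl a y bzero k) as H. rewrite badd_zero, T_zero, badd_zero in H. exact H. Qed.

Lemma T_sub y v k : T (bsub y v) k = bsub (T y k) (T v k).
Proof. unfold bsub. rewrite T_add, !bopp_scal, T_scal. reflexivity. Qed.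

Lemma T_bound y k : bnorm (T y k) <= B * bnorm y.
Proof.
  destruct (HTn y) as [s [Hs [_ Hs2]]]. eapply Rle_trans; [eapply supnorm_ge; eauto | exact Hs2].
Qed.

Lemma T_diff y v k : bnorm (bsub (T y k) (T v k)) <= B * bnorm (bsub y v).
Proof. rewrite <- T_sub. apply T_bound. Qed.

Definition h (n : nat) : K -> X := T (u n).
Definition w (n : nat) : R := / ((INR n + 1) * (B * bnorm (u n) + 1)).

Lemma w_pos n : 0 < w n.
Proof.
  unfold w. pose proof (pos_INR n). pose proof (bnorm_nonneg (u n)).
  assert (0 <= B * bnorm (u n)) by nra.
  apply Rinv_0_lt_compat. apply Rmult_lt_0_compat; nra.
Qed.

Lemma w_le1 n : w n <= 1.
Proof.
  unfold w. pose proof (pos_INR n). pose proof (bnorm_nonneg (u n)).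
  assert (0 <= B * bnorm (u n)) by nra.
  rewrite <- Rinv_1. apply Rinv_le_contravar; [lra|]. nra.
Qed.

Lemma w_term n k k' : w n * bnorm (bsub (h n k) (h n k')) <= 2 / (INR n + 1).
Proof.
  pose proof (pos_INR n). pose proof (bnorm_nonneg (u n)).
  assert (Hb : bnorm (bsub (h n k) (h n k')) <= 2 * (B * bnorm (u n))).
  { eapply Rle_trans; [apply bnorm_sub_le|]. unfold h. pose proof (T_bound (u n) k).
    pose proof (T_bound (u n) k'). lra. }
  unfold w. set (s := B * bnorm (u n)) in *.
  assert (0 <= s) by (unfold s; nra).
  apply (Rmult_le_reg_l ((INR n + 1) * (s + 1))); [nra|].
  rewrite <- Rmult_assoc, Rinv_r by nra. unfold Rdiv.
  replace ((INR n + 1) * (s + 1) * (2 * / (INR n + 1))) with (2 * (s + 1)).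
  - nra.
  - field. lra.
Qed.

Definition pts := {phi : nat -> X | exists k, phi = fun n => h n k}.
Definition q (k : K) : pts := exist _ (fun n => h n k) (ex_intro _ k eq_refl).

Lemma q_surj (x : pts) : exists k, x = q k.
Proof.
  destruct x as [phi Hp]. destruct Hp as [k Hk]. exists k. unfold q.
  subst phi. f_equal; try apply proof_irrelevance.
Qed.

Definition dset (x y : pts) := fun r => exists n, r = w n * bnorm (bsub (proj1_sig x n) (proj1_sig y n)).

Lemma dset_bound x y : bound (dset x y).
Proof.
  exists 2. intros r [n ->].
  destruct (q_surj x) as [k ->]. destruct (q_surj y) as [k' ->]. simpl.
  eapply Rle_trans; [apply w_term|]. pose proof (pos_INR n).
  unfold Rdiv. rewrite <- (Rmult_1_r 2) at 2. apply Rmult_le_compat_l; [lra|].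
  rewrite <- Rinv_1. apply Rinv_le_contravar; lra.
Qed.

Lemma dset_ne x y : exists r, dset x y r.
Proof. exists (w 0 * bnorm (bsub (proj1_sig x 0%nat) (proj1_sig y 0%nat))). exists 0%nat; auto. Qed.

Definition d (x y : pts) : R := proj1_sig (completeness (dset x y) (dset_bound x y) (dset_ne x y)).

Lemma d_lub x y : is_lub (dset x y) (d x y).
Proof. unfold d. destruct completeness; auto. Qed.

Lemma d_ge x y n : w n * bnorm (bsub (proj1_sig x n) (proj1_sig y n)) <= d x y.
Proof. apply (proj1 (d_lub x y)). exists n; auto. Qed.

Lemma d_le x y t : (forall n, w n * bnorm (bsub (proj1_sig x n) (proj1_sig y n)) <= t) -> d x y <= t.
Proof. intros H. apply (proj2 (d_lub x y)). intros r [n ->]; auto. Qed.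

Lemma d_nonneg x y : 0 <= d x y.
Proof.
  eapply Rle_trans; [|apply (d_ge x y 0)].
  apply Rmult_le_pos; [apply Rlt_le, w_pos|apply bnorm_nonneg].
Qed.

Lemma d_sym x y : d x y = d y x.
Proof.
  apply Rle_antisym; apply d_le; intros n; rewrite bsub_sym; apply d_ge.
Qed.

Lemma d_tri x y z : d x z <= d x y + d y z.
Proof.
  apply d_le. intros n. pose proof (d_ge x y n). pose proof (d_ge y z n).
  pose proof (bsub_tri (proj1_sig x n) (proj1_sig y n) (proj1_sig z n)).
  pose proof (w_pos n). nra.
Qed.

Lemma d_refl x : d x x = 0.
Proof.
  apply Rle_antisym; [|apply d_nonneg]. apply d_le. intros n. rewrite bsub_self, bnorm0. lra.
Qed.

Lemma d_eq0 x y : d x y = 0 -> x = y.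
Proof.
  intros H.
  assert (E : forall n, proj1_sig x n = proj1_sig y n).
  { intros n. apply bsub_eq0. pose proof (d_ge x y n). pose proof (w_pos n).
    pose proof (bnorm_nonneg (bsub (proj1_sig x n) (proj1_sig y n))).
    apply Rle_antisym; auto. nra. }
  destruct x as [phi p], y as [psi p']. simpl in E.
  assert (phi = psi) by (extensionality n; auto). subst psi. f_equal; try apply proof_irrelevance.
Qed.

Lemma d_q n k k' : w n * bnorm (bsub (h n k) (h n k')) <= d (q k) (q k').
Proof. apply (d_ge (q k) (q k') n). Qed.

Definition mopen (U : pts -> Prop) : Prop := forall x, U x -> exists r, 0 < r /\ forall z, d x z < r -> U z.

Lemma mopen_full : mopen (fun _ => True).
Proof. intros x _. exists 1; split; auto; lra. Qed.

Lemma mopen_inter U V : mopen U -> mopen V -> mopen (fun x => U x /\ V x).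
Proof.
  intros HU HV x [Ux Vx]. destruct (HU x Ux) as [r1 [Hr1 H1]]. destruct (HV x Vx) as [r2 [Hr2 H2]].
  exists (Rmin r1 r2). split; [apply Rmin_pos; auto|]. intros z Hz.
  pose proof (Rmin_l r1 r2); pose proof (Rmin_r r1 r2). split; [apply H1|apply H2]; lra.
Qed.

Lemma mopen_union (F : (pts -> Prop) -> Prop) :
  (forall U, F U -> mopen U) -> mopen (fun x => exists U, F U /\ U x).
Proof.
  intros H x [U [FU Ux]]. destruct (H U FU x Ux) as [r [Hr HUr]]. exists r; split; auto.
  intros z Hz. exists U; split; auto.
Qed.

Definition K0 : TopSpace := {| pt := pts; is_open := mopen; open_full := mopen_full;
  open_inter := mopen_inter; open_union := mopen_union |}.

Lemma ball_open (c : pts) (r : R) : mopen (fun z => d c z < r).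
Proof.
  intros x Hx. exists (r - d c x). split; [lra|]. intros z Hz.
  pose proof (d_tri c x z). lra.
Qed.

Lemma q_cont (k : K) (eps : R) : 0 < eps ->
  exists U, is_open U /\ U k /\ forall z, U z -> d (q k) (q z) < eps.
Proof.
  intros He. destruct (small_inv (eps / 4)) as [N HN]; [lra|].
  destruct (open_finite k (fun n z => bnorm (bsub (h n z) (h n k)) < eps / 2) N) as [U [HU [Uk HUP]]].
  { intros n _. destruct (proj1 (HTc (u n)) k (eps / 2)) as [U [HU [Uk HUt]]]; [lra|].
    exists U; auto. }
  exists U; split; auto; split; auto. intros z Uz.
  apply Rle_lt_trans with (eps / 2); [|lra]. apply d_le. intros n. simpl.
  destruct (Nat.ltb_spec n N) as [Hn|Hn].
  - specialize (HUP z Uz n Hn). rewrite bsub_sym in HUP. pose proof (w_le1 n). pose proof (w_pos n).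
    pose proof (bnorm_nonneg (bsub (h n k) (h n z))). fold (h n). nra.
  - fold (h n). eapply Rle_trans; [apply w_term|].
    pose proof (le_INR N n ltac:(lia)). pose proof (pos_INR N).
    assert (/ (INR n + 1) <= / (INR N + 1)) by (apply Rinv_le_contravar; lra). lra.
Qed.

Lemma preimage_open (U : pts -> Prop) : mopen U -> is_open (fun k => U (q k)).
Proof.
  intros HU. apply open_local. intros k Uk. destruct (HU (q k) Uk) as [r [Hr Hb]].
  destruct (q_cont k r Hr) as [V [HV [Vk HVd]]]. exists V; split; auto.
Qed.

Lemma K0_compact : top_compact K0.
Proof.
  intros F HF Hcov.
  set (Uk := fun k : K => proj1_sig (constructive_indefinite_description _ (Hcov (q k)))).
  assert (HUk : forall k, F (Uk k) /\ Uk k (q k)).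
  { intros k. unfold Uk. destruct constructive_indefinite_description; auto. }
  destruct (compact_pts (fun k z => Uk k (q z)) HKc) as [l Hl].
  - intros k. apply preimage_open. apply HF, HUk.
  - intros k. apply HUk.
  - exists (map Uk l). split.
    + apply Forall_forall. intros U HU. apply in_map_iff in HU. destruct HU as [k [<- _]]. apply HUk.
    + intros x. destruct (q_surj x) as [z ->]. destruct (Hl z) as [k [Hk Hkz]].
      exists (Uk k). split; auto. apply in_map; auto.
Qed.

Lemma image_closed (C : K -> Prop) : is_open (fun k => ~ C k) -> forall x : pts,
  ~ (exists k, C k /\ q k = x) -> exists r, 0 < r /\ forall k, C k -> r <= d x (q k).
Proof.
  intros HC x Hx.
  set (dl := fun k => d x (q k)).
  assert (Hdl : forall k, C k -> 0 < dl k).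
  { intros k Ck. unfold dl. destruct (Rle_lt_or_eq_dec 0 (d x (q k)) (d_nonneg _ _)) as [?|E]; auto.
    exfalso. apply Hx. exists k. split; auto. symmetry. apply d_eq0; auto. }
  set (rho := fun k z => (C k /\ d (q k) (q z) < dl k / 2) \/ (~ C k /\ ~ C z)).
  destruct (compact_pts rho HKc) as [l Hl].
  - intros k. apply open_local. intros z [[Ck Hz]|[nCk nCz]].
    + destruct (q_cont z (dl k / 2 - d (q k) (q z))) as [V [HV [Vz HVd]]]; [lra|].
      exists V; split; auto; split; auto. intros t Vt. left. split; auto.
      pose proof (d_tri (q k) (q z) (q t)). specialize (HVd t Vt). lra.
    + exists (fun k => ~ C k). split; auto. split; auto. intros t nCt. right; auto.
  - intros k. destruct (classic (C k)) as [Ck|nCk].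
    + left. split; auto. rewrite d_refl. specialize (Hdl k Ck). lra.
    + right; auto.
  - set (M := lmax (fun k => 2 / dl k) l).
    assert (HM : 0 <= M) by apply lmax_nonneg.
    exists (/ (M + 1)). split; [apply Rinv_0_lt_compat; lra|].
    intros k Ck. destruct (Hl k) as [z [Hz [[Cz Hzk]|[_ nCk]]]]; [|contradiction].
    pose proof (lmax_ge (fun k => 2 / dl k) l z Hz) as Hm. simpl in Hm. fold M in Hm.
    pose proof (inv_lmax_lt M (dl z) HM (Hdl z Cz) Hm) as H1.
    pose proof (d_tri x (q k) (q z)) as H2. unfold dl in *. rewrite (d_sym (q k) (q z)) in H2. lra.
Qed.

Lemma fiber_comp_open (a : pts) : is_open (fun k => q k <> a).
Proof.
  apply open_local. intros k Hk.
  assert (Hp : 0 < d (q k) a).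
  { destruct (Rle_lt_or_eq_dec _ _ (d_nonneg (q k) a)) as [?|E]; [auto|].
    exfalso; apply Hk, d_eq0; auto. }
  destruct (q_cont k (d (q k) a)) as [V [HV [Vk HVd]]]; auto.
  exists V; split; auto; split; auto. intros z Vz E. specialize (HVd z Vz). rewrite E in HVd. lra.
Qed.

Lemma K0_scat (P : pts -> Prop) :
  (forall x, ~ P x -> exists r, 0 < r /\ forall z, d x z < r -> ~ P z) ->
  (exists x, P x) -> exists a, P a /\ exists r, 0 < r /\ forall x, P x -> d a x < r -> x = a.
Proof.
  intros HPc [x0 Px0].
  assert (HBc : is_open (fun k => ~ P (q k))).
  { apply open_local. intros k Hk. destruct (HPc (q k) Hk) as [r [Hr Hb]].
    destruct (q_cont k r Hr) as [V [HV [Vk HVd]]]. exists V; split; auto. }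
  set (Fam := fun G : K -> Prop => is_open (fun k => G k \/ ~ P (q k)) /\
                 forall a, P a -> exists k, ~ G k /\ q k = a).
  destruct (zornP K Fam) as [G [[HGo HGf] HGmax]].
  { intros F HF Htot. split.
    - apply open_local. intros k [[X0 [FX0 X0k]]|Hk].
      + exists (fun k => X0 k \/ ~ P (q k)). split; [apply (HF X0 FX0)|]. split; [left; auto|].
        intros z [Xz|Hz]; [left; exists X0; auto|right; auto].
      + exists (fun k => ~ P (q k)). split; auto.
    - intros a Pa. apply NNPP. intros Hno.
      assert (Hcov : forall k, q k = a -> exists X0, F X0 /\ X0 k).
      { intros k Hk. apply NNPP. intros Hn. apply Hno. exists k. split; auto. }
      destruct (HKc (fun U => U = (fun k => q k <> a) \/ exists X0, F X0 /\ U = (fun k => X0 k \/ ~ P (q k)))) as [l [Hl Hlc]].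
      + intros U [->|[X0 [FX0 ->]]]. apply fiber_comp_open. apply (HF X0 FX0).
      + intros k. destruct (classic (q k = a)) as [E|E].
        * destruct (Hcov k E) as [X0 [FX0 X0k]]. exists (fun k => X0 k \/ ~ P (q k)).
          split; [right; exists X0; auto|left; auto].
        * exists (fun k => q k <> a). split; [left; auto|auto].
      + assert (Hmax : exists Hm, (Hm = (fun _ => False) \/ F Hm) /\
                 forall U, In U l -> forall k, U k -> q k <> a \/ Hm k \/ ~ P (q k)).
        { clear Hlc. induction l as [|U l IH].
          - exists (fun _ => False). split; [left; auto|]. intros U [].
          - inversion Hl as [|? ? HU Hl']; subst. destruct (IH Hl') as [Hm [HH HHl]].
            destruct HU as [->|[X0 [FX0 ->]]].
            + exists Hm. split; auto. intros U [<-|HUl] k Uk; [left; auto| apply (HHl U HUl k Uk)].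
            + assert (Hc : exists H', (H' = (fun _ => False) \/ F H') /\ (forall k, Hm k -> H' k) /\ (forall k, X0 k -> H' k)).
              { destruct HH as [->|FH].
                - exists X0. split; [right; auto|]. split; [intros k []|auto].
                - destruct (Htot Hm X0 FH FX0) as [S1|S2].
                  + exists X0. split; [right; auto|]. split; auto.
                  + exists Hm. split; [right; auto|]. split; auto. }
              destruct Hc as [H' [HH' [S1 S2]]]. exists H'. split; auto.
              intros U [<-|HUl] k Uk.
              * destruct Uk as [Xk|Pk]; [right; left; auto|right; right; auto].
              * destruct (HHl U HUl k Uk) as [?|[?|?]]; auto. }
        destruct Hmax as [Hm [HH HHl]].
        assert (Hk : exists k, ~ Hm k /\ q k = a).
        { destruct HH as [->|FH].
          - destruct (q_surj a) as [k ->]. exists k; auto.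
          - destruct (HF Hm FH) as [_ Hf]. apply Hf; auto. }
        destruct Hk as [k [nHk Ek]]. destruct (Hlc k) as [U [HU Uk]].
        destruct (HHl U HU k Uk) as [H1|[H1|H1]]; [contradiction|contradiction|].
        apply H1; rewrite Ek; auto. }
  assert (HF0 : exists k, P (q k) /\ ~ G k).
  { destruct (HGf x0 Px0) as [k [nGk Ek]]; exists k; rewrite Ek; auto. }
  destruct (HKs (fun k => P (q k) /\ ~ G k) HF0) as [k0 [[Pk0 nGk0] [V [HV [Vk0 HVi]]]]].
  set (G' := fun k => G k \/ V k).
  assert (HG'o : is_open (fun k => G' k \/ ~ P (q k))).
  { apply open_local. intros k [[Gk|Vk]|Pk].
    - exists (fun k => G k \/ ~ P (q k)). split; auto. split; [left; auto|].
      intros z [?|?]; [left; left|right]; auto.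
    - exists V. split; auto. split; auto. intros z Vz; left; right; auto.
    - exists (fun k => G k \/ ~ P (q k)). split; auto. split; [right; auto|].
      intros z [?|?]; [left; left|right]; auto. }
  assert (HnF : ~ Fam G').
  { apply (HGmax G'). intros k Gk; left; auto. intros Hsub. apply nGk0, Hsub. right; auto. }
  assert (Ha : exists a, P a /\ forall k, ~ (~ G' k /\ q k = a)).
  { apply NNPP. intros Hn. apply HnF. split; auto. intros a Pa. apply NNPP. intros Hn2.
    apply Hn. exists a. split; auto. intros k Hk. apply Hn2. exists k; auto. }
  destruct Ha as [a [Pa Hak]].
  assert (Eak : a = q k0).
  { destruct (HGf a Pa) as [k1 [nGk1 Ek1]].
    assert (HG1 : G' k1) by (apply NNPP; intros Hn; apply (Hak k1); auto).
    destruct HG1 as [?|Vk1]; [contradiction|]. rewrite <- Ek1. f_equal. apply HVi; auto.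
    split; auto. rewrite Ek1; auto. }
  set (C := fun k => ~ (G' k \/ ~ P (q k))).
  assert (HCo : is_open (fun k => ~ C k)).
  { apply (open_ext _ _ HG'o). intros k. unfold C. split; [tauto| intros Hn; apply NNPP; exact Hn]. }
  destruct (image_closed C HCo a) as [r [Hr HCr]].
  { intros [k [Ck Ek]]. apply (Hak k). split; [intros HG1; apply Ck; left; exact HG1 | exact Ek]. }
  exists a. split; auto. exists r; split; auto. intros x Px Hx.
  destruct (HGf x Px) as [k2 [nGk2 Ek2]].
  destruct (classic (V k2)) as [Vk2|nVk2].
  - rewrite <- Ek2, Eak. f_equal. apply HVi; auto. split; auto. rewrite Ek2; auto.
  - exfalso. assert (HC2 : C k2).
    { unfold C, G'. intros [[?|?]|H1]; try contradiction. apply H1; rewrite Ek2; auto. }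
    specialize (HCr k2 HC2). rewrite Ek2 in HCr. lra.
Qed.

Lemma net_exists (m : nat) : exists l : list K, forall x : pts, exists k, In k l /\ d (q k) x < / (INR m + 1).
Proof.
  destruct (compact_pts (fun k z => d (q k) (q z) < / (INR m + 1)) HKc) as [l Hl].
  - intros k. apply (preimage_open (fun z => d (q k) z < / (INR m + 1))). apply ball_open.
  - intros k. rewrite d_refl. apply Rinv_0_lt_compat. pose proof (pos_INR m); lra.
  - exists l. intros x. destruct (q_surj x) as [z ->]. auto.
Qed.

Definition L (m : nat) : list K := proj1_sig (constructive_indefinite_description _ (net_exists m)).
Lemma L_spec m x : exists k, In k (L m) /\ d (q k) x < / (INR m + 1).
Proof. unfold L. destruct constructive_indefinite_description; auto. Qed.

Definition beta (i : nat) (z : pts) : Prop :=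
  exists k, nth_error (L (fst (of_nat i))) (snd (of_nat i)) = Some k /\ d (q k) z < / (INR (fst (of_nat i)) + 1).

Lemma beta_open i x : beta i x -> exists r, 0 < r /\ forall z, d x z < r -> beta i z.
Proof.
  intros [k [Hk Hd]]. exists (/ (INR (fst (of_nat i)) + 1) - d (q k) x). split; [lra|].
  intros z Hz. exists k. split; auto. pose proof (d_tri (q k) x z). lra.
Qed.

Lemma beta_base a r : 0 < r -> exists i, beta i a /\ forall z, beta i z -> d a z < r.
Proof.
  intros Hr. destruct (small_inv (r / 2)) as [m Hm]; [lra|].
  destruct (L_spec m a) as [k [Hk Hd]]. destruct (In_nth_error _ _ Hk) as [j Hj].
  exists (to_nat (m, j)). unfold beta. rewrite cancel_of_to. simpl. split.
  - exists k; auto.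
  - intros z [k' [Hk' Hd']]. rewrite Hj in Hk'. injection Hk' as <-.
    pose proof (d_tri a (q k) z) as H1. rewrite (d_sym a (q k)) in H1. lra.
Qed.

Definition cnt (Sx : pts -> Prop) : Prop :=
  exists f : pts -> nat, forall y z, Sx y -> Sx z -> f y = f z -> y = z.
Definition Cc (x : pts) : Prop := exists i, beta i x /\ cnt (beta i).

Definition Fi (i : nat) : pts -> nat :=
  match excluded_middle_informative (cnt (beta i)) with
  | left H => proj1_sig (constructive_indefinite_description _ H)
  | right _ => fun _ => 0%nat end.

Lemma Fi_spec i : cnt (beta i) -> forall y z, beta i y -> beta i z -> Fi i y = Fi i z -> y = z.
Proof.
  intros H. unfold Fi. destruct excluded_middle_informative as [H'|H']; [|contradiction].
  destruct constructive_indefinite_description as [f Hf]. simpl. exact Hf.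
Qed.

Definition idx (y : pts) : nat :=
  match excluded_middle_informative (Cc y) with
  | left H => proj1_sig (constructive_indefinite_description _ H)
  | right _ => 0%nat end.

Lemma idx_spec y : Cc y -> beta (idx y) y /\ cnt (beta (idx y)).
Proof.
  intros H. unfold idx. destruct excluded_middle_informative as [H'|H']; [|contradiction].
  destruct constructive_indefinite_description as [i Hi]. exact Hi.
Qed.

Lemma encode (Sx : pts -> Prop) (a : pts) : (forall y, Sx y -> y = a \/ Cc y) -> cnt Sx.
Proof.
  intros HS.
  exists (fun y => match excluded_middle_informative (y = a) with left _ => 0%nat
                  | right _ => S (to_nat (idx y, Fi (idx y) y)) end).
  intros y z Sy Sz.
  destruct (excluded_middle_informative (y = a)) as [Ey|Ey];
  destruct (excluded_middle_informative (z = a)) as [Ez|Ez]; intros E; try congruence.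
  apply Nat.succ_inj in E. apply (f_equal of_nat) in E. rewrite !cancel_of_to in E. injection E as E1 E2.
  destruct (HS y Sy) as [?|Cy]; [contradiction|]. destruct (HS z Sz) as [?|Cz]; [contradiction|].
  destruct (idx_spec y Cy) as [By Cny]. destruct (idx_spec z Cz) as [Bz Cnz].
  rewrite E1 in By, Cny, E2. exact (Fi_spec (idx z) Cnz y z By Bz E2).
Qed.

Lemma all_C x : Cc x.
Proof.
  apply NNPP. intros Hx.
  destruct (K0_scat (fun x => ~ Cc x)) as [a [Pa [r [Hr Hiso]]]].
  - intros y Hy. apply NNPP in Hy. destruct Hy as [i [Bi Ci]].
    destruct (beta_open i y Bi) as [r [Hr Hb]]. exists r; split; auto.
    intros z Hz Hn. apply Hn. exists i; auto.
  - exists x; auto.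
  - destruct (beta_base a r Hr) as [i [Bia Hi]]. apply Pa. exists i. split; auto.
    apply (encode (beta i) a). intros y By. destruct (classic (Cc y)) as [HC|Hn]; [right; exact HC|].
    left. apply Hiso; auto.
Qed.

Lemma K0_countable : countable K0.
Proof.
  destruct (classic (exists a : pts, True)) as [[a _]|Hn].
  - destruct (encode (fun _ => True) a) as [f Hf]. { intros y _; right; apply all_C. }
    exists f. intros x y E. apply Hf; auto.
  - exists (fun _ => 0%nat). intros x. exfalso; apply Hn; exists x; auto.
Qed.

Lemma K0_metrizable : metrizable K0.
Proof.
  exists d. split.
  - split; [exact d_nonneg|]. split; [|split; [exact d_sym|exact d_tri]].
    intros x y; split; [apply d_eq0|intros ->; apply d_refl].
  - intros U. simpl. unfold mopen. tauto.
Qed.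
Lemma nat_floor s : 0 <= s -> exists z : nat, INR z <= s < INR z + 1.
Proof.
  intros Hs. destruct (archimed s) as [H1 H2].
  assert (Hup : (0 < up s)%Z) by (apply lt_IZR; lra).
  exists (Z.to_nat (up s - 1)). rewrite INR_IZR_INZ, Z2Nat.id by lia. rewrite minus_IZR. simpl. lra.
Qed.

Definition coef (b : bool) (z p : nat) : R := (if b then -1 else 1) * (INR z / (INR p + 1)).

Lemma rat_approx t eps : 0 < eps -> exists b z p, Rabs (t - coef b z p) < eps.
Proof.
  intros He. destruct (small_inv eps He) as [p Hp].
  pose proof (pos_INR p) as Hp0.
  destruct (nat_floor (Rabs t * (INR p + 1))) as [z [Hz1 Hz2]].
  { pose proof (Rabs_pos t). nra. }
  assert (Hic : (INR p + 1) * / (INR p + 1) = 1) by (apply Rinv_r; lra).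
  assert (Hip : 0 < / (INR p + 1)) by (apply Rinv_0_lt_compat; lra).
  assert (Hq : Rabs (Rabs t - INR z / (INR p + 1)) < eps).
  { unfold Rdiv. pose proof (Rabs_pos t).
    assert (Et : Rabs t = Rabs t * (INR p + 1) * / (INR p + 1)) by (rewrite Rmult_assoc, Hic; ring).
    assert (H1 : Rabs t * (INR p + 1) * / (INR p + 1) < (INR z + 1) * / (INR p + 1))
      by (apply Rmult_lt_compat_r; lra).
    assert (H2 : INR z * / (INR p + 1) <= Rabs t * (INR p + 1) * / (INR p + 1))
      by (apply Rmult_le_compat_r; lra).
    rewrite <- Et in H1, H2. apply Rabs_def1.
    - apply Rle_lt_trans with (/ (INR p + 1)); [|exact Hp]. lra.
    - lra. }
  destruct (Rle_or_lt 0 t) as [Ht|Ht].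
  - exists false, z, p. unfold coef. rewrite (Rabs_pos_eq t) in Hq by lra. rewrite Rmult_1_l. exact Hq.
  - exists true, z, p. unfold coef. rewrite (Rabs_left t) in Hq by lra.
    replace (t - -1 * (INR z / (INR p + 1))) with (- (- t - INR z / (INR p + 1))) by ring.
    rewrite Rabs_Ropp. exact Hq.
Qed.

Definition Dpt (i : nat) : X :=
  match nth_error (L (fst (of_nat (snd (of_nat i))))) (snd (of_nat (snd (of_nat i)))) with
  | Some k => h (fst (of_nat i)) k
  | None => bzero end.

Fixpoint eval (l : list (bool * nat * nat * nat)) : X :=
  match l with
  | nil => bzero
  | (b, z, p, i) :: l' => badd (bscal (coef b z p) (Dpt i)) (eval l')
  end.

Definition e (n : nat) : X := match Enc.dec n with Some l => eval l | None => bzero end.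

Lemma e_eval n : exists l, e n = eval l.
Proof. unfold e. destruct (Enc.dec n) as [l|]; [exists l; auto|exists nil; auto]. Qed.

Lemma eval_e l : exists n, e n = eval l.
Proof. destruct (Enc.decP l) as [n Hn]. exists n. unfold e. rewrite Hn. auto. Qed.

Lemma eval_app l1 l2 : eval (l1 ++ l2) = badd (eval l1) (eval l2).
Proof.
  induction l1 as [|[[[b z] p] i] l1 IH]; simpl.
  - rewrite badd_zero_l; auto.
  - rewrite IH, badd_assoc. auto.
Qed.

Definition X0 (x : X) : Prop :=
  forall Z : X -> Prop, closed_subspace Z -> (forall n k, Z (h n k)) -> Z x.

Lemma X0_closed : closed_subspace X0.
Proof.
  split; [|split; [|split]].
  - intros Z [H0 _] _; auto.
  - intros x y Hx Hy Z HZ Hg. pose proof HZ as HZ'. destruct HZ as [_ [Ha _]].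
    apply Ha; [apply Hx|apply Hy]; auto.
  - intros a x Hx Z HZ Hg. pose proof HZ as HZ'. destruct HZ as [_ [_ [Hs _]]]. apply Hs; apply Hx; auto.
  - intros v l Hv Hl Z HZ Hg. pose proof HZ as HZ'. destruct HZ as [_ [_ [_ Hlim]]].
    apply (Hlim v l); auto. intros n; apply Hv; auto.
Qed.

Lemma Dpt_in i : X0 (Dpt i).
Proof.
  unfold Dpt. destruct nth_error as [k|].
  - intros Z _ Hg; apply Hg.
  - intros Z [H0 _] _; auto.
Qed.

Lemma eval_in l : X0 (eval l).
Proof.
  destruct X0_closed as [H0 [Ha [Hs _]]].
  induction l as [|[[[b z] p] i] l IH]; simpl; auto.
  apply Ha; auto. apply Hs. apply Dpt_in.
Qed.

Lemma e_in n : X0 (e n).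
Proof. destruct (e_eval n) as [l ->]. apply eval_in. Qed.

Lemma scal_approx a l eps : 0 < eps -> exists l', bnorm (bsub (bscal a (eval l)) (eval l')) < eps.
Proof.
  revert eps. induction l as [|[[[b z] p] i] l IH]; intros eps He; simpl.
  - exists nil. simpl. rewrite bscal_zero_r, bsub_self, bnorm0. auto.
  - pose proof (bnorm_nonneg (Dpt i)) as HD.
    destruct (rat_approx (a * coef b z p) (eps / 2 / (bnorm (Dpt i) + 1))) as [b' [z' [p' Hc]]].
    { apply Rdiv_lt_0_compat; lra. }
    destruct (IH (eps / 2)) as [l'' Hl'']; [lra|].
    exists ((b', z', p', i) :: l''). simpl.
    rewrite bscal_distr_l, bscal_assoc, bsub_add.
    eapply Rle_lt_trans; [apply bnorm_triangle|].
    rewrite bsub_scal2, bnorm_scal.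
    assert (Rabs (a * coef b z p - coef b' z' p') * bnorm (Dpt i) < eps / 2).
    { apply Rle_lt_trans with (eps / 2 / (bnorm (Dpt i) + 1) * bnorm (Dpt i)).
      - apply Rmult_le_compat_r; lra.
      - unfold Rdiv. apply Rlt_le_trans with (eps * / 2 * / (bnorm (Dpt i) + 1) * (bnorm (Dpt i) + 1)).
        + apply Rmult_lt_compat_l; [|lra]. apply Rmult_lt_0_compat; [lra|]. apply Rinv_0_lt_compat; lra.
        + rewrite Rmult_assoc, Rinv_l by lra. lra. }
    lra.
Qed.

Definition Zd (x : X) : Prop := forall eps, 0 < eps -> exists n, bnorm (bsub x (e n)) < eps.

Lemma Zd_closed : closed_subspace Zd.
Proof.
  split; [|split; [|split]].
  - intros eps He. destruct (eval_e nil) as [n Hn]. exists n. rewrite Hn. simpl.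
    rewrite bsub_self, bnorm0. auto.
  - intros x y Hx Hy eps He. destruct (Hx (eps / 2)) as [n1 H1]; [lra|].
    destruct (Hy (eps / 2)) as [n2 H2]; [lra|].
    destruct (e_eval n1) as [l1 E1]. destruct (e_eval n2) as [l2 E2].
    destruct (eval_e (l1 ++ l2)) as [n3 E3]. exists n3. rewrite E3, eval_app, <- E1, <- E2, bsub_add.
    eapply Rle_lt_trans; [apply bnorm_triangle|]. lra.
  - intros a x Hx eps He.
    pose proof (Rabs_pos a).
    destruct (Hx (eps / 2 / (Rabs a + 1))) as [n1 H1]. { apply Rdiv_lt_0_compat; lra. }
    destruct (e_eval n1) as [l1 E1].
    destruct (scal_approx a l1 (eps / 2)) as [l' Hl']; [lra|].
    destruct (eval_e l') as [n2 E2]. exists n2. rewrite E2.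
    eapply Rle_lt_trans; [apply (bsub_tri _ (bscal a (e n1)))|].
    rewrite bsub_scal, bnorm_scal, E1.
    assert (Rabs a * bnorm (bsub x (eval l1)) < eps / 2).
    { rewrite <- E1. pose proof (bnorm_nonneg (bsub x (e n1))).
      apply Rle_lt_trans with (Rabs a * (eps / 2 / (Rabs a + 1))).
      - apply Rmult_le_compat_l; lra.
      - unfold Rdiv. apply Rlt_le_trans with ((Rabs a + 1) * (eps * / 2 * / (Rabs a + 1))).
        + apply Rmult_lt_compat_r; [|lra]. apply Rmult_lt_0_compat; [lra|]. apply Rinv_0_lt_compat; lra.
        + rewrite (Rmult_comm (Rabs a + 1)), Rmult_assoc, Rinv_l by lra. lra. }
    lra.
  - intros v l Hv Hl eps He. destruct (Hl (eps / 2)) as [N HN]; [lra|].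
    destruct (Hv N (eps / 2)) as [n Hn]; [lra|]. exists n.
    eapply Rle_lt_trans; [apply (bsub_tri _ (v N))|]. rewrite bsub_sym.
    specialize (HN N (le_n N)). lra.
Qed.

Lemma gen_Zd n k : Zd (h n k).
Proof.
  intros eps He. pose proof (w_pos n) as Hw.
  destruct (small_inv (w n * eps)) as [m Hm]; [nra|].
  destruct (L_spec m (q k)) as [k' [Hk' Hd]]. destruct (In_nth_error _ _ Hk') as [j Hj].
  destruct (eval_e ((false, 1%nat, 0%nat, to_nat (n, to_nat (m, j))) :: nil)) as [i Ei].
  exists i. rewrite Ei. cbn [eval].
  replace (coef false 1 0) with 1 by (unfold coef; simpl; field).
  rewrite bscal_one, badd_zero. unfold Dpt. rewrite cancel_of_to. cbn [fst snd]. rewrite cancel_of_to. cbn [fst snd]. rewrite Hj.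
  pose proof (d_q n k' k) as Hq. rewrite bsub_sym.
  apply (Rmult_lt_reg_l (w n)); auto. lra.
Qed.

Lemma X0_sep : separable_sub X0.
Proof.
  exists e. split; [apply e_in|]. intros x eps Hx He.
  apply (Hx Zd Zd_closed gen_Zd eps He).
Qed.
Lemma T_in y k : X0 (T y k).
Proof.
  assert (Hn : forall j : nat, exists n, bnorm (bsub y (u n)) < / (INR j + 1)).
  { intros j. apply Hu. apply Rinv_0_lt_compat. pose proof (pos_INR j). lra. }
  set (ns := fun j => proj1_sig (constructive_indefinite_description _ (Hn j))).
  assert (Hns : forall j, bnorm (bsub y (u (ns j))) < / (INR j + 1)).
  { intros j. unfold ns. destruct constructive_indefinite_description; auto. }
  destruct X0_closed as [_ [_ [_ Hlim]]].
  apply (Hlim (fun j => h (ns j) k)).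
  - intros j Z _ Hg. apply Hg.
  - intros eps He. destruct (small_inv (eps / B)) as [N HN]. { apply Rdiv_lt_0_compat; lra. }
    exists N. intros j Hj. unfold h. rewrite bsub_sym.
    eapply Rle_lt_trans; [apply T_diff|].
    pose proof (Hns j) as H1. pose proof (le_INR N j Hj). pose proof (pos_INR N).
    assert (/ (INR j + 1) <= / (INR N + 1)) by (apply Rinv_le_contravar; lra).
    assert (bnorm (bsub y (u (ns j))) < eps / B) by lra.
    apply (Rmult_lt_compat_l B) in H3; auto. unfold Rdiv in H3.
    rewrite <- Rmult_assoc, (Rmult_comm B eps), Rmult_assoc, Rinv_r, Rmult_1_r in H3; lra.
Qed.

Lemma T_q y k k' : q k = q k' -> T y k = T y k'.
Proof.
  intros E. assert (Eh : forall n, h n k = h n k').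
  { intros n. apply (f_equal (fun x => proj1_sig x n)) in E. exact E. }
  apply bsub_eq0. apply Rle_antisym; [|apply bnorm_nonneg].
  apply Rnot_lt_le. intros Hpos.
  destruct (Hu y (bnorm (bsub (T y k) (T y k')) / (4 * B))) as [n Hn].
  { apply Rdiv_lt_0_compat; lra. }
  pose proof (bsub_tri (T y k) (T (u n) k) (T y k')) as H1.
  pose proof (T_diff y (u n) k) as H2. pose proof (T_diff (u n) y k') as H3.
  fold (h n) in H1, H2, H3. rewrite Eh in H1, H2.
  rewrite (bsub_sym (u n) y) in H3.
  assert (B * bnorm (bsub y (u n)) < bnorm (bsub (T y k) (T y k')) / 4).
  { apply (Rmult_lt_compat_l B) in Hn; auto. unfold Rdiv in *.
    replace (B * (bnorm (bsub (T y k) (T y k')) * / (4 * B))) with (bnorm (bsub (T y k) (T y k')) * / 4) in Hn; auto.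
    field. lra. }
  lra.
Qed.

Definition kx (x : pts) : K := proj1_sig (constructive_indefinite_description _ (q_surj x)).
Lemma kx_spec x : x = q (kx x).
Proof. unfold kx. destruct constructive_indefinite_description; auto. Qed.

Definition T0 (y : Y) : K0 -> X := fun x => T y (kx x).

Lemma T0_q y k : T0 y (q k) = T y k.
Proof. unfold T0. apply T_q. symmetry. apply kx_spec. Qed.

Lemma T0_cont y : continuous (T0 y).
Proof.
  intros x eps He.
  destruct (Hu y (eps / 3 / B)) as [n Hn]. { apply Rdiv_lt_0_compat; lra. }
  pose proof (w_pos n) as Hw.
  exists (fun z => d x z < w n * (eps / 3)). split; [apply ball_open|]. split.
  - rewrite d_refl. nra.
  - intros z Hz. unfold T0.
    assert (HB3 : B * bnorm (bsub y (u n)) < eps / 3).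
    { apply (Rmult_lt_compat_l B) in Hn; auto. unfold Rdiv in Hn.
      replace (B * (eps * / 3 * / B)) with (eps / 3) in Hn; auto. field. lra. }
    pose proof (T_diff y (u n) (kx z)) as H1.
    pose proof (T_diff (u n) y (kx x)) as H2. rewrite (bsub_sym (u n)) in H2.
    pose proof (d_q n (kx z) (kx x)) as H3. rewrite <- !kx_spec in H3. rewrite d_sym in H3.
    assert (H4 : bnorm (bsub (h n (kx z)) (h n (kx x))) < eps / 3).
    { apply (Rmult_lt_reg_l (w n)); auto. lra. }
    pose proof (bsub_tri (T y (kx z)) (h n (kx z)) (T y (kx x))) as H5.
    pose proof (bsub_tri (h n (kx z)) (h n (kx x)) (T y (kx x))) as H6.
    unfold h in *. lra.
Qed.

Lemma emb1 : embeds_Banach_into_C Y K0 X X0.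
Proof.
  exists T0, A, B. split; auto. split; auto. split; [|split].
  - intros y. split; [apply T0_cont|]. intros x. apply T_in.
  - intros a y1 y2 x. unfold T0. apply HTl.
  - intros y. destruct (HTn y) as [s [Hs Hs']]. exists s. split; auto.
    apply (supnorm_transfer (T y)); auto.
    + intros x. exists (kx x). reflexivity.
    + intros k. exists (q k). symmetry. apply T0_q.
Qed.

Lemma emb2 : embeds_C_into_C K0 X X0 K X (fun _ => True).
Proof.
  exists (fun f k => f (q k)), 1, 1. split; [lra|]. split; [lra|]. split; [|split].
  - intros f [Hf _]. split; auto. intros k eps He.
    destruct (Hf (q k) eps He) as [U [HU [Uk HUt]]].
    exists (fun z => U (q z)). split; [apply preimage_open; exact HU|]. split; auto.
  - intros a f g _ _ k. reflexivity.
  - intros f [Hf _]. destruct (cont_bounded f K0_compact Hf) as [M HM].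
    destruct (supnorm_exists f M HM) as [s Hs]. exists s, s. split; auto. split.
    + apply (supnorm_transfer f); auto.
      * intros k. exists (q k). reflexivity.
      * intros x. destruct (q_surj x) as [k ->]. exists k. reflexivity.
    + lra.
Qed.

End Main.

Theorem lemma2p4 (K : TopSpace) (X Y : Banach) :
  top_compact K -> hausdorff K -> scattered K ->
  separable Y ->
  embeds_Banach_into_C Y K X (fun _ => True) ->
  exists (K0 : TopSpace) (X0 : X -> Prop),
    countable K0 /\ metrizable K0 /\ top_compact K0 /\
    closed_subspace X0 /\ separable_sub X0 /\
    embeds_Banach_into_C Y K0 X X0 /\
    embeds_C_into_C K0 X X0 K X (fun _ => True).
Proof.
  intros HKc _ HKs [u Hu] [T [A [B [HA [HB [HTc [HTl HTn]]]]]]].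
  exists (K0 K X Y u T A B HB HTn), (X0 K X Y u T).
  split; [eapply K0_countable; eauto|].
  split; [apply K0_metrizable|].
  split; [eapply K0_compact; eauto|].
  split; [apply X0_closed|].
  split; [eapply X0_sep; eauto|].
  split; [eapply emb1; eauto|].
  eapply emb2; eauto.
Qed.
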